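(* For each type below, let $G_X$ be the group with generators $a,b,c$ and the listed relations, and let $A,B,C\in\mathrm{GL}(2,\mathbb{C})$ be as listed. Then (i) $a\mapsto A$, $b\mapsto B$, $c\mapsto C$ induces a group homomorphism $\rho:G_X\to\mathrm{GL}(2,\mathbb{C})$, and (ii) the image $\rho(G_X)$ is not abelian if $l^2\neq1$. 1. $\mathrm{B_{ii}}$ (relations $ababab=bababa,\ bc=ab,\ ac=ca$): $A=u\begin{pmatrix}1&l^2\\0&1\end{pmatrix}$, $B=v\begin{pmatrix}l&0\\0&l^{-1}\end{pmatrix}$, $C=u\begin{pmatrix}1&1\\0&1\end{pmatrix}$, where $l^6=1$ and $u,v\in\mathbb{C}^\times$. 2. $\mathrm{B_{vi}}$ (relations $aba=bab,\ aca=bac,\ acaca=cacac$): $A=u\begin{pmatrix}l&0\\0&l^{-1}\end{pmatrix}$, $B=u\begin{pmatrix}\beta_1&\beta_2\\\beta_3&\beta_4\end{pmatrix}$, $C=u\begin{pmatrix}\gamma_1&\gamma_2\\\gamma_3&\gamma_4\end{pmatrix}$, where $l^{10}=1$, $l^2\neq1$, $u\in\mathbb{C}^\times$, $\beta_1=-\frac{1}{l(l^2-1)}$, $\beta_2\beta_3=\frac{-l^4+l^2-1}{(1-l^2)^2}$, $\beta_4=\frac{l^3}{l^2-1}$, $\gamma_1=-l^4\beta_1$, $\gamma_2=-\beta_2/l^4$, $\gamma_3=-l^4\beta_3$, $\gamma_4=-\beta_4/l^4$. 3. $\mathrm{H_{ii}}$ (relations $abab=baba,\ aca=bac,\ acaca=cacac$):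 $A=u\begin{pmatrix}l&0\\0&l^{-1}\end{pmatrix}$, $B=u\begin{pmatrix}\beta_1&\beta_2\\\beta_3&\beta_4\end{pmatrix}$, $C=u\begin{pmatrix}\gamma_1&\gamma_2\\\gamma_3&\gamma_4\end{pmatrix}$, $u\in\mathbb{C}^\times$, with one of: (i) $l^2+l+1=0$, $3\gamma_1^2+3\gamma_1+2=0$, $\beta_1=\frac{l-1}{3}$, $\beta_4=\frac{-l-2}{3}$, $\beta_2\beta_3=-\frac23$, $\gamma_2=\frac{-\beta_2(l+2)}{3\gamma_1}$, $\gamma_3=\frac{\gamma_1(1-l)}{3\beta_2}$, $\gamma_4=\frac{2}{3\gamma_1}$; or (ii) $l^2-l+1=0$, $3\gamma_1^2-3\gamma_1+2=0$, $\beta_1=\frac{l+1}{3}$, $\beta_4=\frac{-l+2}{3}$, $\beta_2\beta_3=-\frac23$, $\gamma_2=\frac{\beta_2(-l+2)}{3\gamma_1}$, $\gamma_3=\frac{-\gamma_1(l+1)}{3\beta_2}$, $\gamma_4=\frac{2}{3\gamma_1}$. 4. $\mathrm{H_{iii}}$ (relations $aba=bab,\ bcba=cbac,\ cba=acb$): $A=u\begin{pmatrix}l&0\\0&l^{-1}\end{pmatrix}$, $B=u\begin{pmatrix}\beta_1&\beta_2\\\beta_3&\beta_4\end{pmatrix}$, $C=u\begin{pmatrix}\gamma_1&\gamma_2\\\gamma_3&\gamma_4\end{pmatrix}$, where $l^{10}=1$, $l^2\neq1$, $u\in\mathbb{C}^\times$, $\beta_1=-\frac{1}{l(l^2-1)}$,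 $\beta_2\beta_3=\frac{-l^4+l^2-1}{(l^2-1)^2}$, $\beta_4=\frac{l^3}{l^2-1}$, $\gamma_1=\beta_1$, $\gamma_2=\beta_2/l^4$, $\gamma_3=l^4\beta_3$, $\gamma_4=\beta_4$.
   Context: These groups $G_X$ are the fundamental groups of the complements of the corresponding Sekiguchi free divisors in $\mathbb{C}^3$, presented on Zariski–van Kampen generators $a,b,c$. Matrix entries of $B$ and $C$ are renamed $\beta_i,\gamma_i$ here (the paper calls them $a,b,c,d$ and $p,q,r,s$). *)

(* Defs.v *)
From mathcomp Require Import all_boot all_algebra complex.
From mathcomp Require Export reals.
Set Implicit Arguments. Unset Strict Implicit. Unset Printing Implicit Defensive.
Import GRing.Theory Num.Theory.
Local Open Scope ring_scope.

Definition mx2 {C : pzRingType} (a b c d : C) : 'M[C]_2 :=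
  \matrix_(i < 2, j < 2)
    if (i == 0 :> nat) then (if (j == 0 :> nat) then a else b)
    else (if (j == 0 :> nat) then c else d).

(* The subgroup of GL(2,C) generated by A, B, C (given they are invertible):
   the smallest set containing 1 and closed under right multiplication by
   A, B, C and their inverses. *)
Inductive gen3 {F : comUnitRingType} (A B C : 'M[F]_2) : 'M[F]_2 -> Prop :=
  | gen3_1 : gen3 A B C 1%:M
  | gen3_A X : gen3 A B C X -> gen3 A B C (X *m A)
  | gen3_B X : gen3 A B C X -> gen3 A B C (X *m B)
  | gen3_C X : gen3 A B C X -> gen3 A B C (X *m C)
  | gen3_Ai X : gen3 A B C X -> gen3 A B C (X *m invmx A)
  | gen3_Bi X : gen3 A B C X -> gen3 A B C (X *m invmx B)
  | gen3_Ci X : gen3 A B C X -> gen3 A B C (X *m invmx C).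

Definition nonabelian_image {F : comUnitRingType} (A B C : 'M[F]_2) : Prop :=
  exists X Y, gen3 A B C X /\ gen3 A B C Y /\ X *m Y <> Y *m X.

(* a |-> A, b |-> B, c |-> C induces a homomorphism G_X -> GL(2) (von Dyck):
   the matrices are invertible and satisfy the defining relations of G_X. *)
Definition rel_Bii {F : comUnitRingType} (A B C : 'M[F]_2) : Prop :=
  (A \in unitmx /\ B \in unitmx /\ C \in unitmx) /\
  [/\
      A *m B *m A *m B *m A *m B = B *m A *m B *m A *m B *m A,
      B *m C = A *m B &
      A *m C = C *m A].

Definition rel_Bvi {F : comUnitRingType} (A B C : 'M[F]_2) : Prop :=
  (A \in unitmx /\ B \in unitmx /\ C \in unitmx) /\
  [/\
      A *m B *m A = B *m A *m B,
      A *m C *m A = B *m A *m C &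
      A *m C *m A *m C *m A = C *m A *m C *m A *m C].

Definition rel_Hii {F : comUnitRingType} (A B C : 'M[F]_2) : Prop :=
  (A \in unitmx /\ B \in unitmx /\ C \in unitmx) /\
  [/\
      A *m B *m A *m B = B *m A *m B *m A,
      A *m C *m A = B *m A *m C &
      A *m C *m A *m C *m A = C *m A *m C *m A *m C].

Definition rel_Hiii {F : comUnitRingType} (A B C : 'M[F]_2) : Prop :=
  (A \in unitmx /\ B \in unitmx /\ C \in unitmx) /\
  [/\
      A *m B *m A = B *m A *m B,
      B *m C *m B *m A = C *m B *m A *m C &
      C *m B *m A = A *m C *m B].

(* Main.v *)
Require Import Defs.
From mathcomp Require Import all_boot all_algebra complex.
From mathcomp Require Import reals ring.
Import GRing.Theory Num.Theory.
Local Open Scope ring_scope.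
Section Infra.
Variable F : fieldType.
Implicit Types a b c d e f g h k x y : F.

Lemma mx2_mul a b c d e f g h :
  mx2 a b c d *m mx2 e f g h = mx2 (a*e+b*g) (a*f+b*h) (c*e+d*g) (c*f+d*h).
Proof.
apply/matrixP => i j; rewrite !mxE !big_ord_recr big_ord0 /= !mxE add0r.
by case: i => [[|[|i]] Hi] //; case: j => [[|[|j]] Hj].
Qed.

Lemma mx2_scale k a b c d : k *: mx2 a b c d = mx2 (k*a) (k*b) (k*c) (k*d).
Proof.
apply/matrixP => i j; rewrite !mxE.
by case: i => [[|[|i]] Hi] //; case: j => [[|[|j]] Hj].
Qed.

Lemma mx2_det a b c d : \det (mx2 a b c d) = a*d - b*c.
Proof. rewrite (expand_det_row _ ord0) !big_ord_recr big_ord0 /= add0r.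
rewrite /cofactor !mxE /= !det_mx11 !mxE /=.
by rewrite add0n expr0 expr1 mul1r mulN1r mulrN.
Qed.

Lemma mx2_eq a b c d a' b' c' d' :
  a = a' -> b = b' -> c = c' -> d = d' -> mx2 a b c d = mx2 a' b' c' d'.
Proof. by move=> -> -> -> ->. Qed.

Lemma mx2_01 a b c d a' b' c' d' :
  mx2 a b c d = mx2 a' b' c' d' -> b = b'.
Proof. by move/matrixP/(_ ord0 (lift ord0 ord0)); rewrite !mxE. Qed.

Lemma cert1 x y q1 h1 : x - y = q1*h1 -> h1 = 0 -> x = y.
Proof. by move=> e H1; apply/eqP; rewrite -subr_eq0 e H1 mulr0. Qed.
Lemma cert2 x y q1 q2 h1 h2 : x - y = q1*h1 + q2*h2 -> h1 = 0 -> h2 = 0 -> x = y.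
Proof. by move=> e H1 H2; apply/eqP; rewrite -subr_eq0 e H1 H2 !mulr0 addr0. Qed.
Lemma cert3 x y q1 q2 q3 h1 h2 h3 : x - y = q1*h1 + q2*h2 + q3*h3 ->
  h1 = 0 -> h2 = 0 -> h3 = 0 -> x = y.
Proof. by move=> e H1 H2 H3; apply/eqP; rewrite -subr_eq0 e H1 H2 H3 !mulr0 !addr0. Qed.

Lemma inv_cert x y : x * y = 1 -> x^-1 = y.
Proof.
move=> e; have x0 : x != 0.
  by apply/eqP => x0; move: e; rewrite x0 mul0r => /eqP; rewrite eq_sym oner_eq0.
by rewrite -[y]mul1r -(mulVf x0) -mulrA e mulr1.
Qed.
Lemma mx2_unit_cert k a b c d : a*d - b*c = k^+2 -> k != 0 -> mx2 a b c d \in unitmx.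
Proof. by move=> e k0; rewrite unitmxE mx2_det unitfE e expf_neq0. Qed.
End Infra.
Ltac fc := field; try done.
Lemma caseBii (R : realType) :
  (forall (l u v : R[i]),
     l ^+ 6 = 1 -> u != 0 -> v != 0 ->
     let A := u *: mx2 1 (l ^+ 2) 0 1 in
     let B := v *: mx2 l 0 0 l^-1 in
     let C := u *: mx2 1 1 0 1 in
     rel_Bii A B C /\ (l ^+ 2 != 1 -> nonabelian_image A B C)).
Proof.
move=> l u v hl6 hu hv A B C.
have h6 : l^+6 - 1 = 0 by rewrite hl6 subrr.
have hli : l^-1 = l^+5.
  apply: inv_cert. apply: (@cert1 _ _ _ (1) _ _ h6); fc.
rewrite /A /B /C hli.
split; last first.
{ move=> hl2. have l0 : l != 0.
    apply/eqP => l0; move: hl6; rewrite l0 expr0n /= => /eqP; by rewrite eq_sym oner_eq0.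
  do 2 eexists; split; [apply: gen3_A; exact: gen3_1|].
  split; [apply: gen3_B; exact: gen3_1|].
  rewrite !mul1mx !mx2_scale !mx2_mul => /mx2_01 e.
  move/eqP: e; rewrite -subr_eq0 => /eqP e.
  have : u * v * l * (1 - l^+2) = 0.
    by apply: (@cert2 _ _ _ 1 (-(u*v*l)) _ _ _ e h6); fc.
  move/eqP; rewrite !mulf_eq0 (negbTE hu) (negbTE hv) (negbTE l0) /= subr_eq0 eq_sym.
  by rewrite (negbTE hl2). }
split; [split; [|split]|split].
- rewrite mx2_scale; apply: (@mx2_unit_cert _ u _ _ _ _ _ hu).
  apply: (@cert1 _ _ _ 0 _ _ h6); fc.
- rewrite mx2_scale; apply: (@mx2_unit_cert _ v _ _ _ _ _ hv).
  apply: (@cert1 _ _ _ (v^+2) _ _ h6); fc.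
- rewrite mx2_scale; apply: (@mx2_unit_cert _ u _ _ _ _ _ hu).
  apply: (@cert1 _ _ _ 0 _ _ h6); fc.
- rewrite !mx2_scale !mx2_mul; apply: mx2_eq.
  + apply: (@cert1 _ _ _ 0 _ _ h6); fc.
  + apply: (@cert1 _ _ _ (u^+3*v^+3*l^+11 + u^+3*v^+3*l^+5) _ _ h6); fc.
  + apply: (@cert1 _ _ _ 0 _ _ h6); fc.
  + apply: (@cert1 _ _ _ 0 _ _ h6); fc.
- rewrite !mx2_scale !mx2_mul; apply: mx2_eq.
  + apply: (@cert1 _ _ _ 0 _ _ h6); fc.
  + apply: (@cert1 _ _ _ (- u*v*l) _ _ h6); fc.
  + apply: (@cert1 _ _ _ 0 _ _ h6); fc.
  + apply: (@cert1 _ _ _ 0 _ _ h6); fc.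
- rewrite !mx2_scale !mx2_mul; apply: mx2_eq.
  + apply: (@cert1 _ _ _ 0 _ _ h6); fc.
  + apply: (@cert1 _ _ _ 0 _ _ h6); fc.
  + apply: (@cert1 _ _ _ 0 _ _ h6); fc.
  + apply: (@cert1 _ _ _ 0 _ _ h6); fc.
Qed.
Lemma caseBvi (R : realType) :
  (forall (l u b1 b2 b3 b4 c1 c2 c3 c4 : R[i]),
     l ^+ 10 = 1 -> l ^+ 2 != 1 -> u != 0 ->
     b1 = - (1 / (l * (l ^+ 2 - 1))) ->
     b2 * b3 = (- l ^+ 4 + l ^+ 2 - 1) / (1 - l ^+ 2) ^+ 2 ->
     b4 = l ^+ 3 / (l ^+ 2 - 1) ->
     c1 = - (l ^+ 4 * b1) -> c2 = - b2 / l ^+ 4 ->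
     c3 = - (l ^+ 4 * b3) -> c4 = - b4 / l ^+ 4 ->
     let A := u *: mx2 l 0 0 l^-1 in
     let B := u *: mx2 b1 b2 b3 b4 in
     let C := u *: mx2 c1 c2 c3 c4 in
     rel_Bvi A B C /\ (l ^+ 2 != 1 -> nonabelian_image A B C)).
Proof.
move=> l u b1 b2 b3 b4 c1 c2 c3 c4 hl10 hl2 hu hb1 hb23 hb4 hc1 hc2 hc3 hc4 A B C.
have hP : (l^+8 + l^+6 + l^+4 + l^+2 + 1) = 0.
  have e : (l^+2 - 1) * (l^+8 + l^+6 + l^+4 + l^+2 + 1) = l^+10 - 1 by ring.
  by move: e; rewrite hl10 subrr => /eqP; rewrite mulf_eq0 subr_eq0 (negbTE hl2) /= => /eqP.
have hli : l^-1 = (- l^+7 - l^+5 - l^+3 - l).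
  apply: inv_cert. apply: (@cert1 _ _ _ (- 1) _ _ hP); fc.
have hD : (l^+2 - 1)^-1 = (- (1/5)*l^+6 - (2/5)*l^+4 - (3/5)*l^+2 - (4/5)).
  apply: inv_cert. apply: (@cert1 _ _ _ (- (1/5)) _ _ hP); fc.
have hD2 : ((1 - l^+2)^+2)^-1 = ((2/5)*l^+6 + (3/5)*l^+4 + (3/5)*l^+2 + (2/5)).
  apply: inv_cert. apply: (@cert1 _ _ _ ((2/5)*l^+2 - (3/5)) _ _ hP); fc.
have hl4 : (l^+4)^-1 = l^+6.
  apply: inv_cert. apply: (@cert1 _ _ _ (l^+2 - 1) _ _ hP); fc.
have eb1 : b1 = (- (4/5)*l^+7 - (3/5)*l^+5 - (2/5)*l^+3 - (1/5)*l).
  rewrite hb1 div1r invfM hli hD. apply: (@cert1 _ _ _ (- (1/5)*l^+5 - (2/5)*l^+3 - (3/5)*l) _ _ hP); fc.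
have eb4 : b4 = (- (1/5)*l^+7 - (2/5)*l^+5 - (3/5)*l^+3 + (1/5)*l).
  rewrite hb4 hD. apply: (@cert1 _ _ _ (- (1/5)*l) _ _ hP); fc.
have eg : b2 * b3 = (- (1/5)*l^+6 - (1/5)*l^+4 - (3/5)).
  rewrite hb23 hD2. apply: (@cert1 _ _ _ (- (2/5)*l^+2 + (1/5)) _ _ hP); fc.
have hG : b2 * b3 - (- (1/5)*l^+6 - (1/5)*l^+4 - (3/5)) = 0 by rewrite eg subrr.
have ec1 : c1 = (- (1/5)*l^+7 - (2/5)*l^+5 - (3/5)*l^+3 + (1/5)*l).
  rewrite hc1 eb1. apply: (@cert1 _ _ _ ((4/5)*l^+3 - (1/5)*l) _ _ hP); fc.
have ec4 : c4 = (- (4/5)*l^+7 - (3/5)*l^+5 - (2/5)*l^+3 - (1/5)*l).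
  rewrite hc4 eb4 hl4. apply: (@cert1 _ _ _ ((1/5)*l^+5 + (1/5)*l^+3 + (1/5)*l) _ _ hP); fc.
rewrite /A /B /C ec1 ec4 hc2 hc3 hl4 eb1 eb4 hli.
split; last first.
{ have b20 : b2 != 0.
  apply/eqP => b20; move: eg; rewrite b20 mul0r => /esym g0.
  have : (1 : R[i]) = 0.
    apply: (@cert2 _ _ _ (l^+6 + l^+4 - 2) ((1/5)*l^+4 + (1/5)*l^+2 - (1/5)) _ _ _ g0 hP); fc.
  by move/eqP; rewrite oner_eq0.
move=> _; do 2 eexists; split; [apply: gen3_A; exact: gen3_1|].
split; [apply: gen3_B; exact: gen3_1|].
rewrite !mul1mx !mx2_scale !mx2_mul => /mx2_01 e.
move/eqP: e; rewrite -subr_eq0 => /eqP e.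
have : u^+2 * b2 * (l - (- l^+7 - l^+5 - l^+3 - l)) = 0.
  by apply: (@cert1 _ _ _ 1 _ _ e); fc.
move/eqP; rewrite !mulf_eq0 ?expf_eq0 /= !(negbTE hu) (negbTE b20) /= => /eqP e2.
move: hl2; rewrite (_ : l^+2 = 1) ?eqxx //.
apply: (@cert2 _ _ _ l (-1) _ _ _ e2 hP); fc.
}
split; [split; [|split]|split].
- rewrite mx2_scale; apply: (@mx2_unit_cert _ u _ _ _ _ _ hu).
  apply: (@cert2 _ _ _ (- u^+2) 0 _ _ _ hP hG); fc.
- rewrite mx2_scale; apply: (@mx2_unit_cert _ u _ _ _ _ _ hu).
  apply: (@cert2 _ _ _ ((4/25)*u^+2*l^+6 + (7/25)*u^+2*l^+4 + (9/25)*u^+2*l^+2 - (2/5)*u^+2) (- u^+2) _ _ _ hP hG); fc.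
- rewrite mx2_scale; apply: (@mx2_unit_cert _ u _ _ _ _ _ hu).
  apply: (@cert2 _ _ _ ((4/25)*u^+2*l^+6 + (7/25)*u^+2*l^+4 - u^+2*l^+2*b2*b3 + (9/25)*u^+2*l^+2 + u^+2*b2*b3 - (2/5)*u^+2) (- u^+2) _ _ _ hP hG); fc.
- rewrite !mx2_scale !mx2_mul; apply: mx2_eq.
  + apply: (@cert2 _ _ _ (- (16/25)*u^+3*l^+7 - (13/25)*u^+3*l^+5 - (6/25)*u^+3*l^+3 - (3/5)*u^+3*l) (u^+3*l^+7 + u^+3*l^+5 + u^+3*l^+3 + u^+3*l) _ _ _ hP hG); fc.
  + apply: (@cert2 _ _ _ (- (1/5)*u^+3*l^+6*b2 - (2/5)*u^+3*l^+4*b2 - (3/5)*u^+3*l^+2*b2) 0 _ _ _ hP hG); fc.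
  + apply: (@cert2 _ _ _ (- (1/5)*u^+3*l^+6*b3 - (2/5)*u^+3*l^+4*b3 - (3/5)*u^+3*l^+2*b3) 0 _ _ _ hP hG); fc.
  + apply: (@cert2 _ _ _ (- (4/25)*u^+3*l^+13 - (11/25)*u^+3*l^+11 - (4/5)*u^+3*l^+9 - (3/5)*u^+3*l^+7 - (11/25)*u^+3*l^+5 - (9/25)*u^+3*l^+3 + (3/5)*u^+3*l) (- u^+3*l) _ _ _ hP hG); fc.
- rewrite !mx2_scale !mx2_mul; apply: mx2_eq.
  + apply: (@cert2 _ _ _ (- (4/25)*u^+3*l^+7 - (7/25)*u^+3*l^+5 - u^+3*l^+3*b2*b3 - (9/25)*u^+3*l^+3) (u^+3*l^+3) _ _ _ hP hG); fc.
  + apply: (@cert2 _ _ _ (- (3/5)*u^+3*l^+6*b2 - (2/5)*u^+3*l^+4*b2 - (1/5)*u^+3*l^+2*b2) 0 _ _ _ hP hG); fc.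
  + apply: (@cert2 _ _ _ ((1/5)*u^+3*l^+10*b3 + (2/5)*u^+3*l^+8*b3 + (3/5)*u^+3*l^+6*b3 + (4/5)*u^+3*l^+4*b3 - (1/5)*u^+3*l^+2*b3) 0 _ _ _ hP hG); fc.
  + apply: (@cert2 _ _ _ (- (16/25)*u^+3*l^+13 - (24/25)*u^+3*l^+11 - u^+3*l^+9 - (8/5)*u^+3*l^+7 - (14/25)*u^+3*l^+5 - (6/25)*u^+3*l^+3) (u^+3*l^+7) _ _ _ hP hG); fc.
- rewrite !mx2_scale !mx2_mul; apply: mx2_eq.
  + apply: (@cert2 _ _ _ ((4/5)*u^+5*l^+23*b2*b3 + (7/5)*u^+5*l^+21*b2*b3 + (9/5)*u^+5*l^+19*b2*b3 + (8/5)*u^+5*l^+17*b2*b3 - (2/5)*u^+5*l^+15*b2*b3 + (1/125)*u^+5*l^+15 - (6/5)*u^+5*l^+13*b2*b3 + (1/25)*u^+5*l^+13 - (4/5)*u^+5*l^+11*b2*b3 + (3/25)*u^+5*l^+11 + (1/5)*u^+5*l^+9*b2*b3 + (1/5)*u^+5*l^+9 + (6/5)*u^+5*l^+7*b2*b3 + (1/5)*u^+5*l^+7 + (1/5)*u^+5*l^+5*b2*b3 - (1/125)*u^+5*l^+5 - (4/5)*u^+5*l^+3*b2*b3 - (12/25)*u^+5*l^+3 - (4/5)*u^+5*l*b2*b3 - (12/25)*u^+5*l) ((1/5)*u^+5*l^+7 + (7/5)*u^+5*l^+5 + (8/5)*u^+5*l^+3 + (4/5)*u^+5*l) _ _ _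 hP hG); fc.
  + apply: (@cert2 _ _ _ ((16/25)*u^+5*l^+26*b2 + (8/5)*u^+5*l^+24*b2 + (13/5)*u^+5*l^+22*b2 + (101/25)*u^+5*l^+20*b2 + (87/25)*u^+5*l^+18*b2 - u^+5*l^+16*b2^+2*b3 + (12/5)*u^+5*l^+16*b2 + (46/25)*u^+5*l^+14*b2 - (3/25)*u^+5*l^+12*b2 + (8/25)*u^+5*l^+10*b2 + u^+5*l^+8*b2^+2*b3 + (3/5)*u^+5*l^+8*b2 - u^+5*l^+6*b2^+2*b3 - (3/5)*u^+5*l^+6*b2) (u^+5*l^+6*b2) _ _ _ hP hG); fc.
  + apply: (@cert2 _ _ _ ((16/25)*u^+5*l^+24*b3 + (8/5)*u^+5*l^+22*b3 + (13/5)*u^+5*l^+20*b3 + (101/25)*u^+5*l^+18*b3 + (87/25)*u^+5*l^+16*b3 - u^+5*l^+14*b2*b3^+2 + (12/5)*u^+5*l^+14*b3 + (46/25)*u^+5*l^+12*b3 - (3/25)*u^+5*l^+10*b3 + (8/25)*u^+5*l^+8*b3 + u^+5*l^+6*b2*b3^+2 + (3/5)*u^+5*l^+6*b3 - u^+5*l^+4*b2*b3^+2 - (3/5)*u^+5*l^+4*b3) (u^+5*l^+4*b3) _ _ _ hP hG); fc.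
  + apply: (@cert2 _ _ _ (- (16/125)*u^+5*l^+27 - (72/125)*u^+5*l^+25 - (193/125)*u^+5*l^+23 - (399/125)*u^+5*l^+21 - (588/125)*u^+5*l^+19 - (3/5)*u^+5*l^+17*b2*b3 - (676/125)*u^+5*l^+17 - (1/5)*u^+5*l^+15*b2*b3 - (609/125)*u^+5*l^+15 + (1/5)*u^+5*l^+13*b2*b3 - (372/125)*u^+5*l^+13 + (4/5)*u^+5*l^+11*b2*b3 - (171/125)*u^+5*l^+11 + (4/5)*u^+5*l^+9*b2*b3 - (52/125)*u^+5*l^+9 - (1/5)*u^+5*l^+7*b2*b3 - (23/125)*u^+5*l^+7 - (6/5)*u^+5*l^+5*b2*b3 - (74/125)*u^+5*l^+5 - (1/5)*u^+5*l^+3*b2*b3 - (3/25)*u^+5*l^+3 + (4/5)*u^+5*l*b2*b3 + (12/25)*u^+5*l) ((4/5)*u^+5*l^+7 + (3/5)*u^+5*l^+5 - (3/5)*u^+5*l^+3 - (4/5)*u^+5*l) _ _ _ hP hG); fc.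
Qed.
Lemma caseHii (R : realType) :
  (forall (l u b1 b2 b3 b4 c1 c2 c3 c4 : R[i]),
     u != 0 ->
     ((l ^+ 2 + l + 1 = 0 /\ 3 * c1 ^+ 2 + 3 * c1 + 2 = 0 /\
       b1 = (l - 1) / 3 /\ b4 = (- l - 2) / 3 /\ b2 * b3 = - (2 / 3) /\
       c2 = - b2 * (l + 2) / (3 * c1) /\ c3 = c1 * (1 - l) / (3 * b2) /\
       c4 = 2 / (3 * c1))
      \/
      (l ^+ 2 - l + 1 = 0 /\ 3 * c1 ^+ 2 - 3 * c1 + 2 = 0 /\
       b1 = (l + 1) / 3 /\ b4 = (- l + 2) / 3 /\ b2 * b3 = - (2 / 3) /\
       c2 = b2 * (- l + 2) / (3 * c1) /\ c3 = - c1 * (l + 1) / (3 * b2) /\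
       c4 = 2 / (3 * c1))) ->
     let A := u *: mx2 l 0 0 l^-1 in
     let B := u *: mx2 b1 b2 b3 b4 in
     let C := u *: mx2 c1 c2 c3 c4 in
     rel_Hii A B C /\ (l ^+ 2 != 1 -> nonabelian_image A B C)).
Proof.
move=> l u b1 b2 b3 b4 c1 c2 c3 c4 hu [].
- move=> [hQ [hK [hb1 [hb4 [hb23 [hc2 [hc3 hc4]]]]]]] A B C.
  have hG : b2 * b3 + 2/3 = 0 by rewrite hb23 addNr.
  have hli : l^-1 = (- l - 1).
    apply: inv_cert. apply: (@cert1 _ _ _ (- 1) _ _ hQ); fc.
  have hCi : (3 * c1)^-1 = (- (1/2)*c1 - (1/2)).
    apply: inv_cert. apply: (@cert1 _ _ _ (- (1/2)) _ _ hK); fc.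
  have hBi : (3 * b2)^-1 = (- (1/2)*b3).
    apply: inv_cert. apply: (@cert1 _ _ _ (- (3/2)) _ _ hG); fc.
  rewrite /A /B /C hb1 hb4 hc2 hc3 hc4 hCi hBi hli.
  split; last first.
  { move=> hl2. have b20 : b2 != 0.
      apply/eqP => b20; move: hb23; rewrite b20 mul0r => /eqP.
      by rewrite eq_sym oppr_eq0 mulf_eq0 invr_eq0 !pnatr_eq0.
    do 2 eexists; split; [apply: gen3_A; exact: gen3_1|].
    split; [apply: gen3_B; exact: gen3_1|].
    rewrite !mul1mx !mx2_scale !mx2_mul => /mx2_01 e.
    move/eqP: e; rewrite -subr_eq0 => /eqP e.
    have : u^+2 * b2 * (l - (- l - 1)) = 0.
      by apply: (@cert1 _ _ _ 1 _ _ e); fc.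
    move/eqP; rewrite !mulf_eq0 ?expf_eq0 /= !(negbTE hu) (negbTE b20) /= => /eqP e2.
    move: hl2; rewrite (_ : l^+2 = 1) ?eqxx //.
    apply: (@cert2 _ _ _ l (-1) _ _ _ e2 hQ); fc. }
  split; [split; [|split]|split].
  + rewrite mx2_scale; apply: (@mx2_unit_cert _ u _ _ _ _ _ hu).
    apply: (@cert3 _ _ _ (- u^+2) 0 0 _ _ _ _ hQ hK hG); fc.
  + rewrite mx2_scale; apply: (@mx2_unit_cert _ u _ _ _ _ _ hu).
    apply: (@cert3 _ _ _ (- (1/9)*u^+2) 0 (- u^+2) _ _ _ _ hQ hK hG); fc.
  + rewrite mx2_scale; apply: (@mx2_unit_cert _ u _ _ _ _ _ hu).
    apply: (@cert3 _ _ _ (- (1/4)*u^+2*b2*b3*c1^+2 - (1/4)*u^+2*b2*b3*c1) ((1/4)*u^+2*b2*b3 - (1/3)*u^+2) (- (1/2)*u^+2) _ _ _ _ hQ hK hG); fc.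
  + rewrite !mx2_scale !mx2_mul; apply: mx2_eq.
    * apply: (@cert3 _ _ _ 0 0 0 _ _ _ _ hQ hK hG); fc.
    * apply: (@cert3 _ _ _ ((4/3)*u^+4*l*b2 + (2/3)*u^+4*b2) 0 0 _ _ _ _ hQ hK hG); fc.
    * apply: (@cert3 _ _ _ (- (4/3)*u^+4*l*b3 - (2/3)*u^+4*b3) 0 0 _ _ _ _ hQ hK hG); fc.
    * apply: (@cert3 _ _ _ 0 0 0 _ _ _ _ hQ hK hG); fc.
  + rewrite !mx2_scale !mx2_mul; apply: mx2_eq.
    * apply: (@cert3 _ _ _ ((1/2)*u^+3*b2*b3*c1 + (2/3)*u^+3*c1) 0 (- (1/2)*u^+3*l*c1 - u^+3*c1) _ _ _ _ hQ hK hG); fc.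
    * apply: (@cert3 _ _ _ (- (2/3)*u^+3*l*b2*c1 - (2/3)*u^+3*l*b2 - u^+3*b2*c1 - u^+3*b2) 0 0 _ _ _ _ hQ hK hG); fc.
    * apply: (@cert3 _ _ _ (- (2/3)*u^+3*l*b3*c1 + (1/3)*u^+3*b3*c1) 0 0 _ _ _ _ hQ hK hG); fc.
    * apply: (@cert3 _ _ _ (- (1/2)*u^+3*b2*b3*c1 - (1/2)*u^+3*b2*b3 - (2/3)*u^+3*c1 - (2/3)*u^+3) 0 (- (1/2)*u^+3*l*c1 - (1/2)*u^+3*l + (1/2)*u^+3*c1 + (1/2)*u^+3) _ _ _ _ hQ hK hG); fc.
  + rewrite !mx2_scale !mx2_mul; apply: mx2_eq.
    * apply: (@cert3 _ _ _ (- (1/4)*u^+5*l^+3*b2*b3*c1^+2 - (1/4)*u^+5*l^+3*b2*b3*c1 + (3/4)*u^+5*l^+2*b2*b3*c1^+3 + (3/4)*u^+5*l^+2*b2*b3*c1^+2 + u^+5*l*b2*b3*c1^+3 + (9/4)*u^+5*l*b2*b3*c1^+2 + (5/4)*u^+5*l*b2*b3*c1 + u^+5*l*c1^+2 - 2*u^+5*b2*b3*c1^+3 - (5/2)*u^+5*b2*b3*c1^+2 - (1/2)*u^+5*b2*b3*c1 - u^+5*c1^+3 - u^+5*c1^+2) (- (1/4)*u^+5*l*b2*b3*c1 - (1/2)*u^+5*l*b2*b3 + (1/3)*u^+5*l*c1 - (1/3)*u^+5*l + (1/2)*u^+5*b2*b3*c1 + (1/3)*u^+5*c1) ((1/2)*u^+5*l*c1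 + u^+5*l - u^+5*c1) _ _ _ _ hQ hK hG); fc.
    * apply: (@cert3 _ _ _ ((1/8)*u^+5*l^+3*b2^+2*b3*c1^+3 + (1/4)*u^+5*l^+3*b2^+2*b3*c1^+2 + (1/8)*u^+5*l^+3*b2^+2*b3*c1 + (3/8)*u^+5*l^+2*b2^+2*b3*c1^+3 + (3/4)*u^+5*l^+2*b2^+2*b3*c1^+2 + (3/8)*u^+5*l^+2*b2^+2*b3*c1 - u^+5*l^+2*b2*c1^+2 - (3/2)*u^+5*l^+2*b2*c1 - (1/2)*u^+5*l^+2*b2 - (1/8)*u^+5*l*b2^+2*b3*c1^+3 - (1/4)*u^+5*l*b2^+2*b3*c1^+2 - (1/8)*u^+5*l*b2^+2*b3*c1 - (3/2)*u^+5*l*b2*c1^+3 - (11/2)*u^+5*l*b2*c1^+2 - 6*u^+5*l*b2*c1 - 2*u^+5*l*b2 - (3/4)*u^+5*b2^+2*b3*c1^+3 - (3/2)*u^+5*b2^+2*b3*c1^+2 - (3/4)*u^+5*b2^+2*b3*c1 - 3*u^+5*b2*c1^+3 - 7*u^+5*b2*c1^+2 - 6*u^+5*b2*c1 - 2*u^+5*b2) ((1/8)*u^+5*l*b2^+2*b3*c1 + (1/8)*u^+5*l*b2^+2*b3 + (1/3)*u^+5*l*b2*c1 + (1/3)*u^+5*l*b2 + (1/4)*u^+5*b2^+2*b3*c1 + (1/4)*u^+5*b2^+2*b3 + (2/3)*u^+5*b2*c1 + (2/3)*u^+5*b2) (- (1/4)*u^+5*l*b2*c1 - (1/4)*u^+5*l*b2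 - (1/2)*u^+5*b2*c1 - (1/2)*u^+5*b2) _ _ _ _ hQ hK hG); fc.
    * apply: (@cert3 _ _ _ ((1/8)*u^+5*l^+3*b2*b3^+2*c1^+3 + (1/8)*u^+5*l^+3*b2*b3^+2*c1^+2 - u^+5*l^+2*b3*c1^+2 - (1/2)*u^+5*l^+2*b3*c1 - (1/2)*u^+5*l*b2*b3^+2*c1^+3 - (1/2)*u^+5*l*b2*b3^+2*c1^+2 - (3/2)*u^+5*l*b3*c1^+3 - u^+5*l*b3*c1^+2 - (1/2)*u^+5*l*b3*c1 + (3/8)*u^+5*b2*b3^+2*c1^+3 + (3/8)*u^+5*b2*b3^+2*c1^+2 + (3/2)*u^+5*b3*c1^+3 + 2*u^+5*b3*c1^+2 + u^+5*b3*c1) ((1/8)*u^+5*l*b2*b3^+2*c1 + (1/3)*u^+5*l*b3*c1 - (1/8)*u^+5*b2*b3^+2*c1 - (1/3)*u^+5*b3*c1) (- (1/4)*u^+5*l*b3*c1 + (1/4)*u^+5*b3*c1) _ _ _ _ hQ hK hG); fc.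
    * apply: (@cert3 _ _ _ ((1/4)*u^+5*l^+3*b2*b3*c1^+2 + (1/4)*u^+5*l^+3*b2*b3*c1 - (3/4)*u^+5*l^+2*b2*b3*c1^+3 - (3/4)*u^+5*l^+2*b2*b3*c1^+2 - (1/2)*u^+5*l*b2*b3*c1^+3 - (3/2)*u^+5*l*b2*b3*c1^+2 - u^+5*l*b2*b3*c1 - u^+5*l*c1^+2 - 2*u^+5*l*c1 - u^+5*l + (9/4)*u^+5*b2*b3*c1^+3 + 3*u^+5*b2*b3*c1^+2 + (3/4)*u^+5*b2*b3*c1 + u^+5*c1^+3 + u^+5*c1^+2 - u^+5*c1 - u^+5) (- (1/4)*u^+5*l*b2*b3*c1 + (1/4)*u^+5*l*b2*b3 + (1/3)*u^+5*l*c1 + (2/3)*u^+5*l - (3/4)*u^+5*b2*b3*c1 - (1/4)*u^+5*b2*b3 + (1/3)*u^+5) ((1/2)*u^+5*l*c1 - (1/2)*u^+5*l + (3/2)*u^+5*c1 + (1/2)*u^+5) _ _ _ _ hQ hK hG); fc.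
- move=> [hQ [hK [hb1 [hb4 [hb23 [hc2 [hc3 hc4]]]]]]] A B C.
  have hG : b2 * b3 + 2/3 = 0 by rewrite hb23 addNr.
  have hli : l^-1 = (- l + 1).
    apply: inv_cert. apply: (@cert1 _ _ _ (- 1) _ _ hQ); fc.
  have hCi : (3 * c1)^-1 = (- (1/2)*c1 + (1/2)).
    apply: inv_cert. apply: (@cert1 _ _ _ (- (1/2)) _ _ hK); fc.
  have hBi : (3 * b2)^-1 = (- (1/2)*b3).
    apply: inv_cert. apply: (@cert1 _ _ _ (- (3/2)) _ _ hG); fc.
  rewrite /A /B /C hb1 hb4 hc2 hc3 hc4 hCi hBi hli.
  split; last first.
  { move=> hl2. have b20 : b2 != 0.
      apply/eqP => b20; move: hb23; rewrite b20 mul0r => /eqP.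
      by rewrite eq_sym oppr_eq0 mulf_eq0 invr_eq0 !pnatr_eq0.
    do 2 eexists; split; [apply: gen3_A; exact: gen3_1|].
    split; [apply: gen3_B; exact: gen3_1|].
    rewrite !mul1mx !mx2_scale !mx2_mul => /mx2_01 e.
    move/eqP: e; rewrite -subr_eq0 => /eqP e.
    have : u^+2 * b2 * (l - (- l + 1)) = 0.
      by apply: (@cert1 _ _ _ 1 _ _ e); fc.
    move/eqP; rewrite !mulf_eq0 ?expf_eq0 /= !(negbTE hu) (negbTE b20) /= => /eqP e2.
    move: hl2; rewrite (_ : l^+2 = 1) ?eqxx //.
    apply: (@cert2 _ _ _ l (-1) _ _ _ e2 hQ); fc. }
  split; [split; [|split]|split].
  + rewrite mx2_scale; apply: (@mx2_unit_cert _ u _ _ _ _ _ hu).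
    apply: (@cert3 _ _ _ (- u^+2) 0 0 _ _ _ _ hQ hK hG); fc.
  + rewrite mx2_scale; apply: (@mx2_unit_cert _ u _ _ _ _ _ hu).
    apply: (@cert3 _ _ _ (- (1/9)*u^+2) 0 (- u^+2) _ _ _ _ hQ hK hG); fc.
  + rewrite mx2_scale; apply: (@mx2_unit_cert _ u _ _ _ _ _ hu).
    apply: (@cert3 _ _ _ (- (1/4)*u^+2*b2*b3*c1^+2 + (1/4)*u^+2*b2*b3*c1) ((1/4)*u^+2*b2*b3 - (1/3)*u^+2) (- (1/2)*u^+2) _ _ _ _ hQ hK hG); fc.
  + rewrite !mx2_scale !mx2_mul; apply: mx2_eq.
    * apply: (@cert3 _ _ _ 0 0 0 _ _ _ _ hQ hK hG); fc.
    * apply: (@cert3 _ _ _ ((4/3)*u^+4*l*b2 - (2/3)*u^+4*b2) 0 0 _ _ _ _ hQ hK hG); fc.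
    * apply: (@cert3 _ _ _ (- (4/3)*u^+4*l*b3 + (2/3)*u^+4*b3) 0 0 _ _ _ _ hQ hK hG); fc.
    * apply: (@cert3 _ _ _ 0 0 0 _ _ _ _ hQ hK hG); fc.
  + rewrite !mx2_scale !mx2_mul; apply: mx2_eq.
    * apply: (@cert3 _ _ _ ((1/2)*u^+3*b2*b3*c1 + (2/3)*u^+3*c1) 0 ((1/2)*u^+3*l*c1 - u^+3*c1) _ _ _ _ hQ hK hG); fc.
    * apply: (@cert3 _ _ _ (- (2/3)*u^+3*l*b2*c1 + (2/3)*u^+3*l*b2 + u^+3*b2*c1 - u^+3*b2) 0 0 _ _ _ _ hQ hK hG); fc.
    * apply: (@cert3 _ _ _ (- (2/3)*u^+3*l*b3*c1 - (1/3)*u^+3*b3*c1) 0 0 _ _ _ _ hQ hK hG); fc.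
    * apply: (@cert3 _ _ _ (- (1/2)*u^+3*b2*b3*c1 + (1/2)*u^+3*b2*b3 - (2/3)*u^+3*c1 + (2/3)*u^+3) 0 ((1/2)*u^+3*l*c1 - (1/2)*u^+3*l + (1/2)*u^+3*c1 - (1/2)*u^+3) _ _ _ _ hQ hK hG); fc.
  + rewrite !mx2_scale !mx2_mul; apply: mx2_eq.
    * apply: (@cert3 _ _ _ (- (1/4)*u^+5*l^+3*b2*b3*c1^+2 + (1/4)*u^+5*l^+3*b2*b3*c1 + (3/4)*u^+5*l^+2*b2*b3*c1^+3 - (3/4)*u^+5*l^+2*b2*b3*c1^+2 - u^+5*l*b2*b3*c1^+3 + (9/4)*u^+5*l*b2*b3*c1^+2 - (5/4)*u^+5*l*b2*b3*c1 + u^+5*l*c1^+2 - 2*u^+5*b2*b3*c1^+3 + (5/2)*u^+5*b2*b3*c1^+2 - (1/2)*u^+5*b2*b3*c1 - u^+5*c1^+3 + u^+5*c1^+2) ((1/4)*u^+5*l*b2*b3*c1 - (1/2)*u^+5*l*b2*b3 - (1/3)*u^+5*l*c1 - (1/3)*u^+5*l + (1/2)*u^+5*b2*b3*c1 + (1/3)*u^+5*c1) (- (1/2)*u^+5*l*c1 + u^+5*l - u^+5*c1) _ _ _ _ hQ hK hG); fc.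
    * apply: (@cert3 _ _ _ ((1/8)*u^+5*l^+3*b2^+2*b3*c1^+3 - (1/4)*u^+5*l^+3*b2^+2*b3*c1^+2 + (1/8)*u^+5*l^+3*b2^+2*b3*c1 - (3/8)*u^+5*l^+2*b2^+2*b3*c1^+3 + (3/4)*u^+5*l^+2*b2^+2*b3*c1^+2 - (3/8)*u^+5*l^+2*b2^+2*b3*c1 - u^+5*l^+2*b2*c1^+2 + (3/2)*u^+5*l^+2*b2*c1 - (1/2)*u^+5*l^+2*b2 - (1/8)*u^+5*l*b2^+2*b3*c1^+3 + (1/4)*u^+5*l*b2^+2*b3*c1^+2 - (1/8)*u^+5*l*b2^+2*b3*c1 - (3/2)*u^+5*l*b2*c1^+3 + (11/2)*u^+5*l*b2*c1^+2 - 6*u^+5*l*b2*c1 + 2*u^+5*l*b2 + (3/4)*u^+5*b2^+2*b3*c1^+3 - (3/2)*u^+5*b2^+2*b3*c1^+2 + (3/4)*u^+5*b2^+2*b3*c1 + 3*u^+5*b2*c1^+3 - 7*u^+5*b2*c1^+2 + 6*u^+5*b2*c1 - 2*u^+5*b2) ((1/8)*u^+5*l*b2^+2*b3*c1 - (1/8)*u^+5*l*b2^+2*b3 + (1/3)*u^+5*l*b2*c1 - (1/3)*u^+5*l*b2 - (1/4)*u^+5*b2^+2*b3*c1 + (1/4)*u^+5*b2^+2*b3 - (2/3)*u^+5*b2*c1 + (2/3)*u^+5*b2) (- (1/4)*u^+5*l*b2*c1 + (1/4)*u^+5*l*b2 + (1/2)*u^+5*b2*c1 - (1/2)*u^+5*b2)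 _ _ _ _ hQ hK hG); fc.
    * apply: (@cert3 _ _ _ ((1/8)*u^+5*l^+3*b2*b3^+2*c1^+3 - (1/8)*u^+5*l^+3*b2*b3^+2*c1^+2 - u^+5*l^+2*b3*c1^+2 + (1/2)*u^+5*l^+2*b3*c1 - (1/2)*u^+5*l*b2*b3^+2*c1^+3 + (1/2)*u^+5*l*b2*b3^+2*c1^+2 - (3/2)*u^+5*l*b3*c1^+3 + u^+5*l*b3*c1^+2 - (1/2)*u^+5*l*b3*c1 - (3/8)*u^+5*b2*b3^+2*c1^+3 + (3/8)*u^+5*b2*b3^+2*c1^+2 - (3/2)*u^+5*b3*c1^+3 + 2*u^+5*b3*c1^+2 - u^+5*b3*c1) ((1/8)*u^+5*l*b2*b3^+2*c1 + (1/3)*u^+5*l*b3*c1 + (1/8)*u^+5*b2*b3^+2*c1 + (1/3)*u^+5*b3*c1) (- (1/4)*u^+5*l*b3*c1 - (1/4)*u^+5*b3*c1) _ _ _ _ hQ hK hG); fc.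
    * apply: (@cert3 _ _ _ ((1/4)*u^+5*l^+3*b2*b3*c1^+2 - (1/4)*u^+5*l^+3*b2*b3*c1 - (3/4)*u^+5*l^+2*b2*b3*c1^+3 + (3/4)*u^+5*l^+2*b2*b3*c1^+2 + (1/2)*u^+5*l*b2*b3*c1^+3 - (3/2)*u^+5*l*b2*b3*c1^+2 + u^+5*l*b2*b3*c1 - u^+5*l*c1^+2 + 2*u^+5*l*c1 - u^+5*l + (9/4)*u^+5*b2*b3*c1^+3 - 3*u^+5*b2*b3*c1^+2 + (3/4)*u^+5*b2*b3*c1 + u^+5*c1^+3 - u^+5*c1^+2 - u^+5*c1 + u^+5) ((1/4)*u^+5*l*b2*b3*c1 + (1/4)*u^+5*l*b2*b3 - (1/3)*u^+5*l*c1 + (2/3)*u^+5*l - (3/4)*u^+5*b2*b3*c1 + (1/4)*u^+5*b2*b3 - (1/3)*u^+5) (- (1/2)*u^+5*l*c1 - (1/2)*u^+5*l + (3/2)*u^+5*c1 - (1/2)*u^+5) _ _ _ _ hQ hK hG); fc.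
Qed.
Lemma caseHiii (R : realType) :
  (forall (l u b1 b2 b3 b4 c1 c2 c3 c4 : R[i]),
     l ^+ 10 = 1 -> l ^+ 2 != 1 -> u != 0 ->
     b1 = - (1 / (l * (l ^+ 2 - 1))) ->
     b2 * b3 = (- l ^+ 4 + l ^+ 2 - 1) / (l ^+ 2 - 1) ^+ 2 ->
     b4 = l ^+ 3 / (l ^+ 2 - 1) ->
     c1 = b1 -> c2 = b2 / l ^+ 4 -> c3 = l ^+ 4 * b3 -> c4 = b4 ->
     let A := u *: mx2 l 0 0 l^-1 in
     let B := u *: mx2 b1 b2 b3 b4 in
     let C := u *: mx2 c1 c2 c3 c4 in
     rel_Hiii A B C /\ (l ^+ 2 != 1 -> nonabelian_image A B C)).
Proof.
move=> l u b1 b2 b3 b4 c1 c2 c3 c4 hl10 hl2 hu hb1 hb23 hb4 hc1 hc2 hc3 hc4 A B C.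
have hP : (l^+8 + l^+6 + l^+4 + l^+2 + 1) = 0.
  have e : (l^+2 - 1) * (l^+8 + l^+6 + l^+4 + l^+2 + 1) = l^+10 - 1 by ring.
  by move: e; rewrite hl10 subrr => /eqP; rewrite mulf_eq0 subr_eq0 (negbTE hl2) /= => /eqP.
have hli : l^-1 = (- l^+7 - l^+5 - l^+3 - l).
  apply: inv_cert. apply: (@cert1 _ _ _ (- 1) _ _ hP); fc.
have hD : (l^+2 - 1)^-1 = (- (1/5)*l^+6 - (2/5)*l^+4 - (3/5)*l^+2 - (4/5)).
  apply: inv_cert. apply: (@cert1 _ _ _ (- (1/5)) _ _ hP); fc.
have hD2 : ((l^+2 - 1)^+2)^-1 = ((2/5)*l^+6 + (3/5)*l^+4 + (3/5)*l^+2 + (2/5)).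
  apply: inv_cert. apply: (@cert1 _ _ _ ((2/5)*l^+2 - (3/5)) _ _ hP); fc.
have hl4 : (l^+4)^-1 = l^+6.
  apply: inv_cert. apply: (@cert1 _ _ _ (l^+2 - 1) _ _ hP); fc.
have eb1 : b1 = (- (4/5)*l^+7 - (3/5)*l^+5 - (2/5)*l^+3 - (1/5)*l).
  rewrite hb1 div1r invfM hli hD. apply: (@cert1 _ _ _ (- (1/5)*l^+5 - (2/5)*l^+3 - (3/5)*l) _ _ hP); fc.
have eb4 : b4 = (- (1/5)*l^+7 - (2/5)*l^+5 - (3/5)*l^+3 + (1/5)*l).
  rewrite hb4 hD. apply: (@cert1 _ _ _ (- (1/5)*l) _ _ hP); fc.
have eg : b2 * b3 = (- (1/5)*l^+6 - (1/5)*l^+4 - (3/5)).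
  rewrite hb23 hD2. apply: (@cert1 _ _ _ (- (2/5)*l^+2 + (1/5)) _ _ hP); fc.
have hG : b2 * b3 - (- (1/5)*l^+6 - (1/5)*l^+4 - (3/5)) = 0 by rewrite eg subrr.
rewrite /A /B /C hc1 hc2 hc3 hc4 hl4 eb1 eb4 hli.
split; last first.
{ have b20 : b2 != 0.
  apply/eqP => b20; move: eg; rewrite b20 mul0r => /esym g0.
  have : (1 : R[i]) = 0.
    apply: (@cert2 _ _ _ (l^+6 + l^+4 - 2) ((1/5)*l^+4 + (1/5)*l^+2 - (1/5)) _ _ _ g0 hP); fc.
  by move/eqP; rewrite oner_eq0.
move=> _; do 2 eexists; split; [apply: gen3_A; exact: gen3_1|].
split; [apply: gen3_B; exact: gen3_1|].
rewrite !mul1mx !mx2_scale !mx2_mul => /mx2_01 e.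
move/eqP: e; rewrite -subr_eq0 => /eqP e.
have : u^+2 * b2 * (l - (- l^+7 - l^+5 - l^+3 - l)) = 0.
  by apply: (@cert1 _ _ _ 1 _ _ e); fc.
move/eqP; rewrite !mulf_eq0 ?expf_eq0 /= !(negbTE hu) (negbTE b20) /= => /eqP e2.
move: hl2; rewrite (_ : l^+2 = 1) ?eqxx //.
apply: (@cert2 _ _ _ l (-1) _ _ _ e2 hP); fc.
}
split; [split; [|split]|split].
- rewrite mx2_scale; apply: (@mx2_unit_cert _ u _ _ _ _ _ hu).
  apply: (@cert2 _ _ _ (- u^+2) 0 _ _ _ hP hG); fc.
- rewrite mx2_scale; apply: (@mx2_unit_cert _ u _ _ _ _ _ hu).
  apply: (@cert2 _ _ _ ((4/25)*u^+2*l^+6 + (7/25)*u^+2*l^+4 + (9/25)*u^+2*l^+2 - (2/5)*u^+2) (- u^+2) _ _ _ hP hG); fc.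
- rewrite mx2_scale; apply: (@mx2_unit_cert _ u _ _ _ _ _ hu).
  apply: (@cert2 _ _ _ ((4/25)*u^+2*l^+6 + (7/25)*u^+2*l^+4 - u^+2*l^+2*b2*b3 + (9/25)*u^+2*l^+2 + u^+2*b2*b3 - (2/5)*u^+2) (- u^+2) _ _ _ hP hG); fc.
- rewrite !mx2_scale !mx2_mul; apply: mx2_eq.
  + apply: (@cert2 _ _ _ (- (16/25)*u^+3*l^+7 - (13/25)*u^+3*l^+5 - (6/25)*u^+3*l^+3 - (3/5)*u^+3*l) (u^+3*l^+7 + u^+3*l^+5 + u^+3*l^+3 + u^+3*l) _ _ _ hP hG); fc.
  + apply: (@cert2 _ _ _ (- (1/5)*u^+3*l^+6*b2 - (2/5)*u^+3*l^+4*b2 - (3/5)*u^+3*l^+2*b2) 0 _ _ _ hP hG); fc.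
  + apply: (@cert2 _ _ _ (- (1/5)*u^+3*l^+6*b3 - (2/5)*u^+3*l^+4*b3 - (3/5)*u^+3*l^+2*b3) 0 _ _ _ hP hG); fc.
  + apply: (@cert2 _ _ _ (- (4/25)*u^+3*l^+13 - (11/25)*u^+3*l^+11 - (4/5)*u^+3*l^+9 - (3/5)*u^+3*l^+7 - (11/25)*u^+3*l^+5 - (9/25)*u^+3*l^+3 + (3/5)*u^+3*l) (- u^+3*l) _ _ _ hP hG); fc.
- rewrite !mx2_scale !mx2_mul; apply: mx2_eq.
  + apply: (@cert2 _ _ _ (- (1/5)*u^+4*l^+16*b2*b3 - (2/5)*u^+4*l^+14*b2*b3 - (3/5)*u^+4*l^+12*b2*b3 - (3/5)*u^+4*l^+10*b2*b3 - (2/5)*u^+4*l^+8*b2*b3 - (1/5)*u^+4*l^+6*b2*b3 - (4/5)*u^+4*l^+4*b2*b3 + (1/5)*u^+4*l^+2*b2*b3) 0 _ _ _ hP hG); fc.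
  + apply: (@cert2 _ _ _ (- (3/25)*u^+4*l^+19*b2 - (7/25)*u^+4*l^+17*b2 - (2/5)*u^+4*l^+15*b2 - (29/25)*u^+4*l^+13*b2 - (22/25)*u^+4*l^+11*b2 - (19/25)*u^+4*l^+9*b2 - (2/5)*u^+4*l^+7*b2 - u^+4*l^+5*b2^+2*b3 + (3/25)*u^+4*l^+5*b2 - (3/25)*u^+4*l^+3*b2) 0 _ _ _ hP hG); fc.
  + apply: (@cert2 _ _ _ ((1/25)*u^+4*l^+17*b3 + (4/25)*u^+4*l^+15*b3 + (2/5)*u^+4*l^+13*b3 - (2/25)*u^+4*l^+11*b3 + (3/25)*u^+4*l^+9*b3 + u^+4*l^+7*b2*b3^+2 + (12/25)*u^+4*l^+7*b3 - (6/25)*u^+4*l^+5*b3 + (3/25)*u^+4*l^+3*b3) 0 _ _ _ hP hG); fc.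
  + apply: (@cert2 _ _ _ ((1/5)*u^+4*l^+12*b2*b3 + (6/5)*u^+4*l^+10*b2*b3 + (2/5)*u^+4*l^+8*b2*b3 + (3/5)*u^+4*l^+6*b2*b3 + (2/5)*u^+4*l^+4*b2*b3 + (1/5)*u^+4*l^+2*b2*b3) 0 _ _ _ hP hG); fc.
- rewrite !mx2_scale !mx2_mul; apply: mx2_eq.
  + apply: (@cert2 _ _ _ 0 0 _ _ _ hP hG); fc.
  + apply: (@cert2 _ _ _ ((1/5)*u^+3*l^+12*b2 + (2/5)*u^+3*l^+10*b2 + (3/5)*u^+3*l^+8*b2 + (4/5)*u^+3*l^+6*b2 + (3/5)*u^+3*l^+4*b2 + (2/5)*u^+3*l^+2*b2) 0 _ _ _ hP hG); fc.
  + apply: (@cert2 _ _ _ (- (4/5)*u^+3*l^+10*b3 - (3/5)*u^+3*l^+8*b3 - (3/5)*u^+3*l^+6*b3 - (7/5)*u^+3*l^+4*b3 + (2/5)*u^+3*l^+2*b3) 0 _ _ _ hP hG); fc.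
  + apply: (@cert2 _ _ _ 0 0 _ _ _ hP hG); fc.
Qed.
Theorem theorem5 (R : realType) :
  (* 1. B_ii *)
  (forall (l u v : R[i]),
     l ^+ 6 = 1 -> u != 0 -> v != 0 ->
     let A := u *: mx2 1 (l ^+ 2) 0 1 in
     let B := v *: mx2 l 0 0 l^-1 in
     let C := u *: mx2 1 1 0 1 in
     rel_Bii A B C /\ (l ^+ 2 != 1 -> nonabelian_image A B C))
  /\
  (* 2. B_vi *)
  (forall (l u b1 b2 b3 b4 c1 c2 c3 c4 : R[i]),
     l ^+ 10 = 1 -> l ^+ 2 != 1 -> u != 0 ->
     b1 = - (1 / (l * (l ^+ 2 - 1))) ->
     b2 * b3 = (- l ^+ 4 + l ^+ 2 - 1) / (1 - l ^+ 2) ^+ 2 ->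
     b4 = l ^+ 3 / (l ^+ 2 - 1) ->
     c1 = - (l ^+ 4 * b1) -> c2 = - b2 / l ^+ 4 ->
     c3 = - (l ^+ 4 * b3) -> c4 = - b4 / l ^+ 4 ->
     let A := u *: mx2 l 0 0 l^-1 in
     let B := u *: mx2 b1 b2 b3 b4 in
     let C := u *: mx2 c1 c2 c3 c4 in
     rel_Bvi A B C /\ (l ^+ 2 != 1 -> nonabelian_image A B C))
  /\
  (* 3. H_ii *)
  (forall (l u b1 b2 b3 b4 c1 c2 c3 c4 : R[i]),
     u != 0 ->
     ((l ^+ 2 + l + 1 = 0 /\ 3 * c1 ^+ 2 + 3 * c1 + 2 = 0 /\
       b1 = (l - 1) / 3 /\ b4 = (- l - 2) / 3 /\ b2 * b3 = - (2 / 3) /\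
       c2 = - b2 * (l + 2) / (3 * c1) /\ c3 = c1 * (1 - l) / (3 * b2) /\
       c4 = 2 / (3 * c1))
      \/
      (l ^+ 2 - l + 1 = 0 /\ 3 * c1 ^+ 2 - 3 * c1 + 2 = 0 /\
       b1 = (l + 1) / 3 /\ b4 = (- l + 2) / 3 /\ b2 * b3 = - (2 / 3) /\
       c2 = b2 * (- l + 2) / (3 * c1) /\ c3 = - c1 * (l + 1) / (3 * b2) /\
       c4 = 2 / (3 * c1))) ->
     let A := u *: mx2 l 0 0 l^-1 in
     let B := u *: mx2 b1 b2 b3 b4 in
     let C := u *: mx2 c1 c2 c3 c4 in
     rel_Hii A B C /\ (l ^+ 2 != 1 -> nonabelian_image A B C))
  /\
  (* 4. H_iii *)
  (forall (l u b1 b2 b3 b4 c1 c2 c3 c4 : R[i]),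
     l ^+ 10 = 1 -> l ^+ 2 != 1 -> u != 0 ->
     b1 = - (1 / (l * (l ^+ 2 - 1))) ->
     b2 * b3 = (- l ^+ 4 + l ^+ 2 - 1) / (l ^+ 2 - 1) ^+ 2 ->
     b4 = l ^+ 3 / (l ^+ 2 - 1) ->
     c1 = b1 -> c2 = b2 / l ^+ 4 -> c3 = l ^+ 4 * b3 -> c4 = b4 ->
     let A := u *: mx2 l 0 0 l^-1 in
     let B := u *: mx2 b1 b2 b3 b4 in
     let C := u *: mx2 c1 c2 c3 c4 in
     rel_Hiii A B C /\ (l ^+ 2 != 1 -> nonabelian_image A B C)).
Proof. split; [exact: caseBii|split; [exact: caseBvi|split; [exact: caseHii|exact: caseHiii]]]. Qed.
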